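(* Let $G=(V,E)$ be a $(2,2)$-$C_i$-tight graph or a $(2,2)$-$C_s$-tight graph, with involution $v\mapsto v'$. Suppose $v\in V$ has degree 3 with $N(v)=\{x,y,z\}$ and $xy\notin E$. If no $2$-critical subset of $V\setminus\{v,v'\}$ contains both $x$ and $y$, then there is no $W\subseteq V\setminus\{v,v'\}$ with $x,x',y,y'\in W$ and $i_G(W)=2|W|-3$.
   Context: A $\mathbb{Z}_2$-symmetric graph is a finite simple graph $G=(V,E)$ with an automorphism $\theta$ satisfying $\theta^2=\mathrm{id}$; write $v'=\theta(v)$. A vertex is fixed if $v'=v$; an edge $uv$ is fixed if $\{u',v'\}=\{u,v\}$. $G$ is $(2,2)$-sparse if every subgraph $(V',E')$ with $V'\ne\emptyset$ has $|E'|\le 2|V'|-2$, and $(2,2)$-tight if also $|E|=2|V|-2$. $G$ is $(2,2)$-$C_i$-tight if it is $(2,2)$-tight and $\theta$ fixes no vertex and no edge; $(2,2)$-$C_s$-tight if it is $(2,2)$-tight and $\theta$ fixes no edge. For $X\subseteq V$, $i_G(X)$ is the number of edges of the induced subgraph $G[X]$; $X$ is $k$-critical if $i_G(X)=2|X|-k$. *)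

(* Defs.v *)
From mathcomp Require Import all_boot.
Set Implicit Arguments. Unset Strict Implicit. Unset Printing Implicit Defensive.

Definition simple_graph (T : finType) (E : {set {set T}}) : Prop :=
  forall e, e \in E -> #|e| = 2.

Definition is_edge (T : finType) (E : {set {set T}}) (u v : T) : bool :=
  [set u; v] \in E.

Definition nbhd (T : finType) (E : {set {set T}}) (v : T) : {set T} :=
  [set u | is_edge E u v].

Definition Z2_sym (T : finType) (E : {set {set T}}) (theta : T -> T) : Prop :=
  (forall v, theta (theta v) = v) /\
  (forall e : {set T}, (theta @: e \in E) = (e \in E)).

Definition fixed_vertex (T : finType) (theta : T -> T) (v : T) : bool := theta v == v.
Definition fixed_edge (T : finType) (theta : T -> T) (e : {set T}) : bool := theta @: e == e.

Definition sparse22 (T : finType) (E : {set {set T}}) : Prop :=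
  forall (V' : {set T}) (E' : {set {set T}}),
    V' != set0 -> E' \subset E -> (forall e, e \in E' -> e \subset V') ->
    #|E'| + 2 <= 2 * #|V'|.

Definition tight22 (T : finType) (E : {set {set T}}) : Prop :=
  sparse22 E /\ #|E| + 2 = 2 * #|T|.

Definition Ci_tight22 (T : finType) (E : {set {set T}}) (theta : T -> T) : Prop :=
  tight22 E /\ (forall v, ~~ fixed_vertex theta v) /\
  (forall e, e \in E -> ~~ fixed_edge theta e).

Definition Cs_tight22 (T : finType) (E : {set {set T}}) (theta : T -> T) : Prop :=
  tight22 E /\ (forall e, e \in E -> ~~ fixed_edge theta e).

Definition iG (T : finType) (E : {set {set T}}) (X : {set T}) : nat :=
  #|[set e in E | e \subset X]|.

(* X is k-critical: i_G(X) = 2|X| - k (integer arithmetic, stated without truncation). *)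
Definition critical (T : finType) (E : {set {set T}}) (k : nat) (X : {set T}) : Prop :=
  iG E X + k = 2 * #|X|.

(* Main.v *)
Require Import Defs.
From mathcomp Require Import all_boot.
From mathcomp Require Import zify.

Set Implicit Arguments. Unset Strict Implicit. Unset Printing Implicit Defensive.

Lemma even_invol (K : finType) (S : {set K}) (f : K -> K) :
  (forall e, f (f e) = e) -> (forall e, e \in S -> f e \in S) ->
  (forall e, e \in S -> f e != e) -> ~~ odd #|S|.
Proof.
move=> ff fS fne.
have finj : injective f by apply: (can_inj ff).
set A := [set e in S | (enum_rank e < enum_rank (f e))%N].
have eqS : S = A :|: f @: A.
  apply/setP=> e; rewrite in_setU; apply/idP/idP.
    move=> eS; have hne := fne e eS.
    have rne : (enum_rank e : nat) != enum_rank (f e).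
      apply/negP=> /eqP /val_inj /enum_rank_inj h; by rewrite -h eqxx in hne.
    case: (ltngtP (enum_rank e) (enum_rank (f e))) => h.
    - by rewrite /A !inE eS h.
    - apply/orP; right; apply/imsetP; exists (f e); last by rewrite ff.
      by rewrite inE fS //= ff h.
    - by rewrite h eqxx in rne.
  case/orP=> [|/imsetP[a]]; rewrite /A inE; [by case/andP | move=> /andP[aS _] ->; exact: fS].
have disj : A :&: f @: A = set0.
  apply/setP=> e; rewrite !inE; apply/negP=> /andP[/andP[_ h1] /imsetP[a]].
  rewrite inE => /andP[_ h2] ea; subst e; rewrite ff in h1.
  by have := ltn_trans h1 h2; rewrite ltnn.
have := cardsUI A (f @: A); rewrite -eqS disj cards0 addn0 card_imset // => ->.
by rewrite addnn odd_double.
Qed.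

Section S.
Variables (T : finType) (E : {set {set T}}) (theta : T -> T).
Hypothesis hth : forall v, theta (theta v) = v.
Hypothesis hE : forall e : {set T}, (theta @: e \in E) = (e \in E).

Lemma invol_set (X : {set T}) : theta @: (theta @: X) = X.
Proof. by rewrite -imset_comp (eq_imset _ hth) imset_id. Qed.

Lemma iG_le (X : {set T}) : iG E X <= iG E (theta @: X).
Proof.
rewrite /iG.
have inj : injective (fun e : {set T} => theta @: e) by apply: (can_inj (g := fun e : {set T} => theta @: e) invol_set).
rewrite -(card_imset _ inj); apply: subset_leq_card.
apply/subsetP=> e /imsetP[a]; rewrite inE => /andP[aE aX] ->.
by rewrite inE hE aE imsetS.
Qed.

Lemma iG_img (X : {set T}) : iG E (theta @: X) = iG E X.
Proof.
apply/eqP; rewrite eqn_leq iG_le andbT.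
by have := iG_le (theta @: X); rewrite invol_set.
Qed.

Lemma iG_sub (A B : {set T}) : iG E A + iG E B <= iG E (A :|: B) + iG E (A :&: B).
Proof.
rewrite /iG -cardsUI; apply: leq_add; apply: subset_leq_card; apply/subsetP=> e;
  rewrite !inE.
- case/orP=> /andP[-> h] /=; apply: subset_trans h _; [exact: subsetUl|exact: subsetUr].
- by case/andP=> /andP[-> h1] /andP[_ h2]; rewrite subsetI h1 h2.
Qed.

Lemma iG_even (U : {set T}) : theta @: U = U ->
  (forall e, e \in E -> ~~ fixed_edge theta e) -> ~~ odd (iG E U).
Proof.
move=> hU hfix; rewrite /iG; apply: (@even_invol {set T} [set e in E | e \subset U] (fun e => theta @: e)).
- exact: invol_set.
- move=> e; rewrite !inE => /andP[eE eU]; by rewrite hE eE -hU imsetS.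
- move=> e; rewrite inE => /andP[eE _]; exact: hfix.
Qed.

End S.

Theorem lemma5p2 (T : finType) (E : {set {set T}}) (theta : T -> T)
  (v x y z : T) :
  simple_graph E -> Z2_sym E theta ->
  (Ci_tight22 E theta \/ Cs_tight22 E theta) ->
  #|nbhd E v| = 3 -> nbhd E v = [set x; y; z] ->
  ~~ is_edge E x y ->
  ~ (exists X : {set T}, X \subset ~: [set v; theta v] /\
        x \in X /\ y \in X /\ critical E 2 X) ->
  ~ (exists W : {set T}, W \subset ~: [set v; theta v] /\
        x \in W /\ theta x \in W /\ y \in W /\ theta y \in W /\
        critical E 3 W).
Proof.
move=> _ [hth hE] hC _ _ _ hno [W [WV [xW [txW [yW [tyW cW]]]]]].
have [sp hfix] : sparse22 E /\ (forall e, e \in E -> ~~ fixed_edge theta e).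
  by case: hC => [[[sp _] [_ h]]|[[sp _] h]].
have spX : forall X : {set T}, x \in X -> iG E X + 2 <= 2 * #|X|.
  move=> X xX; apply: (sp X [set e in E | e \subset X]).
  - by apply/set0Pn; exists x.
  - by apply/subsetP=> e; rewrite inE => /andP[].
  - by move=> e; rewrite inE => /andP[].
set W' := theta @: W.
set U := W :|: W'; set I := W :&: W'.
have cW' : #|W'| = #|W| by rewrite card_imset //; apply: (can_inj hth).
have iW' : iG E W' = iG E W by apply: iG_img.
have hsub := iG_sub E W W'.
have hcard := cardsUI W W'.
have W'V : W' \subset ~: [set v; theta v].
  apply/subsetP=> a /imsetP[b bW ->]; have := subsetP WV b bW.
  rewrite !inE !negb_or => /andP[h1 h2]; apply/andP; split.
    by apply: contra h2 => /eqP <-; rewrite hth.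
  by apply: contra h1 => /eqP /(can_inj hth) ->.
have xW' : x \in W' by apply/imsetP; exists (theta x); rewrite ?hth.
have yW' : y \in W' by apply/imsetP; exists (theta y); rewrite ?hth.
have xU : x \in U by rewrite inE xW.
have xI : x \in I by rewrite inE xW xW'.
have spU := spX U xU; have spI := spX I xI.
have nU : iG E U + 2 != 2 * #|U|.
  apply/eqP=> h; apply: hno; exists U; split; first by rewrite subUset WV W'V.
  by split; [exact: xU | split; [rewrite inE yW | exact: h]].
have nI : iG E I + 2 != 2 * #|I|.
  apply/eqP=> h; apply: hno; exists I; split; first by apply: subset_trans WV; exact: subsetIl.
  by split; [exact: xI | split; [rewrite inE yW yW' | exact: h]].
have hU : theta @: U = U by rewrite imsetU invol_set // setUC.
have ev := iG_even hth hE hU hfix.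
move: cW cW' iW' hsub hcard spU spI nU nI ev.
rewrite /critical.
move: (iG E U) (iG E I) (iG E W) (iG E W') #|U| #|I| #|W| #|W'| => a b c d p q r s.
move=> h1 h2 h3 h4 h5 h6 h7 /eqP h8 /eqP h9 h10.
have ha : a = (a./2).*2 by rewrite -{1}(odd_double_half a) (negbTE h10).
rewrite -muln2 in ha; lia.
Qed.
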